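(* Let $M$ be a matroid of rank $r$ on a finite set $E$, and let $\mathcal H$ be the set of hyperplanes of $M$. Suppose that for each $H\in\mathcal H$, $U_H$ is an $(r-1)$-free set with $\mathrm{cl}_{r-2}(U_H)=H$, and put \[ \mathcal U=\{U_H : H\in\mathcal H,\ |U_H|\ge r\}. \] Then $\mathcal U$ is the set of dependent hyperplanes of a paving matroid of rank $r$ on $E$.
   Context: A set $U\subseteq E$ is $k$-free (in $M$) if there is no circuit $C$ of $M$ with $|C|\le k$ and $C\subseteq U$. A set $X$ is $k$-closed in $M$ if $\mathrm{cl}_M(Y)\subseteq X$ for all $Y\subseteq X$ with $|Y|\le k$; $\mathrm{cl}_k(X)$ is the intersection of all $k$-closed sets containing $X$. A matroid of rank $r$ is paving if all its circuits have at least $r$ elements. *)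

(* Defs.v *)
From mathcomp Require Import all_boot all_order all_algebra.
Set Implicit Arguments. Unset Strict Implicit. Unset Printing Implicit Defensive.

(* A matroid on a finite ground set E, represented as the finite type T
   (so E = [set: T]), given by its independent sets. *)
Record matroid (T : finType) := Matroid {
  indep : {set T} -> bool;
  indep0 : indep set0;
  indep_sub : forall I J : {set T}, J \subset I -> indep I -> indep J;
  indep_aug : forall I J : {set T}, indep I -> indep J -> #|I| < #|J| ->
    exists2 x, x \in J :\: I & indep (x |: I)
}.

Section MatroidDefs.
Variables (T : finType) (M : matroid T).

Definition mrank (X : {set T}) : nat :=
  \max_(I : {set T} | indep M I && (I \subset X)) #|I|.

Definition mrk : nat := mrank [set: T].

Definition circuit (C : {set T}) : bool :=
  ~~ indep M C && [forall x in C, indep M (C :\ x)].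

Definition mcl (X : {set T}) : {set T} :=
  [set x | mrank (x |: X) == mrank X].

Definition flat (X : {set T}) : bool := mcl X == X.

Definition hyperplane (H : {set T}) : bool := flat H && ((mrank H).+1 == mrk).

Definition kfree (k : nat) (U : {set T}) : bool :=
  [forall C : {set T}, ~~ [&& circuit C, #|C| <= k & C \subset U]].

(* X is k-closed: cl(Y) \subset X for all Y \subset X with |Y| <= k.
   k is an integer so that negative k (e.g. r - 2 with r = 1) is allowed. *)
Definition kclosed (k : int) (X : {set T}) : bool :=
  [forall Y : {set T}, (Y \subset X) && (#|Y|%:Z <= k)%R ==> (mcl Y \subset X)].

Definition clk (k : int) (X : {set T}) : {set T} :=
  \bigcap_(Z : {set T} | kclosed k Z && (X \subset Z)) Z.

Definition paving : bool := [forall C : {set T}, circuit C ==> (mrk <= #|C|)].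

Definition dependent_hyperplane (H : {set T}) : bool :=
  hyperplane H && ~~ indep M H.

End MatroidDefs.

(* Main.v *)
Require Import Defs.
From mathcomp Require Import all_boot all_order all_algebra zify.
Set Implicit Arguments. Unset Strict Implicit. Unset Printing Implicit Defensive.

Lemma mrank_ub (T : finType) (M : matroid T) (I X : {set T}) :
  indep M I -> I \subset X -> #|I| <= mrank M X.
Proof.
move=> hI hIX; rewrite /mrank.
by apply: (leq_bigmax_cond (F := fun I : {set T} => #|I|)); rewrite hI hIX.
Qed.

Lemma mrank_wit (T : finType) (M : matroid T) (X : {set T}) :
  exists2 I : {set T}, indep M I && (I \subset X) & #|I| = mrank M X.
Proof.
rewrite /mrank.
have : 0 < #|[pred I : {set T} | indep M I && (I \subset X)]|.
  apply/card_gt0P; exists set0; by rewrite inE indep0 sub0set.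
move/(eq_bigmax_cond (fun I : {set T} => #|I|)) => [I0 hI0 ->].
by exists I0; first by rewrite inE in hI0.
Qed.

Lemma mrank_mono (T : finType) (M : matroid T) (X Y : {set T}) :
  X \subset Y -> mrank M X <= mrank M Y.
Proof.
move=> sXY; have [I /andP[hI sIX] <-] := mrank_wit M X.
by apply: mrank_ub => //; apply: subset_trans sIX sXY.
Qed.

Lemma mrank_le (T : finType) (M : matroid T) (X : {set T}) k :
  (forall I, indep M I -> I \subset X -> #|I| <= k) -> mrank M X <= k.
Proof. by move=> h; have [I /andP[hI sIX] <-] := mrank_wit M X; apply: h. Qed.

Lemma setU1_in (T : finType) (x : T) (A : {set T}) : x \in A -> x |: A = A.
Proof. by move=> xA; apply/setP => y; rewrite !inE; case: eqP => // ->. Qed.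

Lemma sub_card (T : finType) (A : {set T}) k : k <= #|A| ->
  exists2 S : {set T}, S \subset A & #|S| = k.
Proof.
elim: k => [|k IH] hk; first by exists set0; rewrite ?sub0set ?cards0.
have [S sSA cS] := IH (ltnW hk).
have : A :\: S != set0.
  apply/negP; rewrite setD_eq0 => sAS; have := subset_leq_card sAS; lia.
case/set0Pn => x; rewrite inE => /andP[xS xA].
exists (x |: S); first by rewrite subUset sub1set xA sSA.
by rewrite cardsU1 xS cS.
Qed.

Lemma dep_circuit (T : finType) (M : matroid T) (Y : {set T}) :
  ~~ indep M Y -> exists2 C, circuit M C & C \subset Y.
Proof.
move=> hY.
pose P n := [exists C : {set T}, [&& C \subset Y, ~~ indep M C & #|C| == n]].
have exP : exists n, P n by exists #|Y|; apply/existsP; exists Y; rewrite subxx hY eqxx.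
case: (ex_minnP exP) => n /existsP[C /and3P[sCY hC /eqP cC]] minn.
exists C => //; rewrite /circuit hC /=; apply/forallP => x; apply/implyP => xC.
apply/negPn/negP => hCx.
have : n <= #|C :\ x|.
  apply: minn; apply/existsP; exists (C :\ x); rewrite hCx eqxx andbT.
  rewrite andbT; apply/subsetP => y; rewrite !inE => /andP[_ yC]; exact: (subsetP sCY).
by rewrite -cC (cardsD1 x C) xC; lia.
Qed.

Lemma clk_sub (T : finType) (M : matroid T) k (X : {set T}) : X \subset clk M k X.
Proof. by apply/bigcapsP => Z /andP[]. Qed.

Lemma hyp_rank (T : finType) (M : matroid T) (H : {set T}) :
  hyperplane M H -> (mrank M H).+1 = mrk M.
Proof. by case/andP => _ /eqP. Qed.

Lemma hyp_flat (T : finType) (M : matroid T) (H : {set T}) :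
  hyperplane M H -> mcl M H = H.
Proof. by case/andP => /eqP. Qed.

Lemma free_indep (T : finType) (M : matroid T) k (V Y : {set T}) :
  kfree M k V -> Y \subset V -> #|Y| <= k -> indep M Y.
Proof.
move=> hV sYV cY; apply/negPn/negP => /dep_circuit [C hC sCY].
move/forallP: hV => /(_ C); rewrite hC /= (subset_trans sCY sYV) andbT.
by rewrite (leq_trans (subset_leq_card sCY) cY).
Qed.

Lemma KL (T : finType) (M : matroid T) (H Y : {set T}) (x : T) :
  hyperplane M H -> Y \subset H -> indep M Y -> #|Y| = (mrk M).-1 ->
  x \notin H -> indep M (x |: Y).
Proof.
move=> hH sYH iY cY xH.
have rH := hyp_rank hH.
have : x \notin mcl M H by rewrite hyp_flat.
rewrite inE => ne.
have le := mrank_mono M (subsetUr [set x] H).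
have [I /andP[iI sI] cI] := mrank_wit M (x |: H).
have lt : #|Y| < #|I| by rewrite cI cY -rH /=; rewrite ltn_neqAle eq_sym ne le.
have [z] := indep_aug iY iI lt.
rewrite inE => /andP[zY zI] iz.
case: (eqVneq z x) => [<- //|zx].
have zH : z \in H.
  by move: (subsetP sI z zI); case/setU1P => // zx2; rewrite zx2 eqxx in zx.
have : #|z |: Y| <= mrank M H.
  by apply: mrank_ub => //; rewrite subUset sub1set zH sYH.
by rewrite cardsU1 zY cY -rH add1n /= ltnn.
Qed.

Lemma same_hyp (T : finType) (M : matroid T) (H1 H2 Y : {set T}) :
  hyperplane M H1 -> hyperplane M H2 -> Y \subset H1 -> Y \subset H2 ->
  indep M Y -> #|Y| = (mrk M).-1 -> H1 \subset H2.
Proof.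
move=> h1 h2 s1 s2 iY cY; apply/subsetP => x xH1; apply/negPn/negP => xH2.
have ix := KL h2 s2 iY cY xH2.
have xY : x \notin Y by apply: contra xH2; apply: (subsetP s2).
have : #|x |: Y| <= mrank M H1.
  by apply: mrank_ub => //; rewrite subUset sub1set xH1 s1.
by rewrite cardsU1 xY cY -(hyp_rank h1) add1n /= ltnn.
Qed.

Definition HypU (T : finType) (M : matroid T) (U : {set T} -> {set T}) :=
  forall H : {set T}, hyperplane M H ->
     kfree M (mrk M).-1 (U H) /\ clk M ((mrk M)%:Z - 2)%R (U H) = H.

Lemma U_sub (T : finType) (M : matroid T) U (H : {set T}) :
  HypU M U -> hyperplane M H -> U H \subset H.
Proof. by move=> hU hH; have [_ e] := hU H hH; have := clk_sub M ((mrk M)%:Z - 2)%R (U H); rewrite e. Qed.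

Lemma U_inj (T : finType) (M : matroid T) U (H1 H2 Y : {set T}) :
  HypU M U -> hyperplane M H1 -> hyperplane M H2 ->
  Y \subset U H1 -> Y \subset U H2 -> #|Y| = (mrk M).-1 -> H1 = H2.
Proof.
move=> hU h1 h2 s1 s2 cY.
have iY : indep M Y by apply: (free_indep (hU _ h1).1 s1); rewrite cY.
have t1 := subset_trans s1 (U_sub hU h1).
have t2 := subset_trans s2 (U_sub hU h2).
by apply/eqP; rewrite eqEsubset (same_hyp h1 h2 t1 t2 iY cY) (same_hyp h2 h1 t2 t1 iY cY).
Qed.

Definition inUH (T : finType) (M : matroid T) (U : {set T} -> {set T}) (I : {set T}) :=
  [exists H : {set T}, [&& hyperplane M H, mrk M <= #|U H| & I \subset U H]].

Definition indepN (T : finType) (M : matroid T) (U : {set T} -> {set T}) (I : {set T}) :=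
  (#|I| < mrk M) || ((#|I| == mrk M) && ~~ inUH M U I).

Lemma hyp_rpos (T : finType) (M : matroid T) (H : {set T}) : hyperplane M H -> 0 < mrk M.
Proof. by move/hyp_rank <-. Qed.

Lemma inUH_rpos (T : finType) (M : matroid T) U I : inUH M U I -> 0 < mrk M.
Proof. by case/existsP => H /and3P[hH _ _]; apply: hyp_rpos hH. Qed.

Lemma indepN_le (T : finType) (M : matroid T) U I : indepN M U I -> #|I| <= mrk M.
Proof. by case/orP => [/ltnW //|/andP[/eqP -> _]]. Qed.

Lemma N0 (T : finType) (M : matroid T) U : indepN M U set0.
Proof.
rewrite /indepN cards0; case: (posnP (mrk M)) => [r0|//].
rewrite r0 eqxx /=; apply/negP => /inUH_rpos; by rewrite r0.
Qed.

Lemma Nsub (T : finType) (M : matroid T) U (I J : {set T}) :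
  J \subset I -> indepN M U I -> indepN M U J.
Proof.
move=> sJI; case/orP => [lt|/andP[/eqP cI nP]].
  by rewrite /indepN (leq_ltn_trans (subset_leq_card sJI) lt).
have le := subset_leq_card sJI.
rewrite /indepN; case: (ltngtP #|J| (mrk M)) => // [gt|eqJ].
  by move: le; rewrite cI leqNgt gt.
have eJI : J = I.
  by apply/setP; apply/(subset_cardP _ sJI); rewrite eqJ cI.
by rewrite eJI nP.
Qed.

Lemma Naug (T : finType) (M : matroid T) U (I J : {set T}) :
  HypU M U -> indepN M U I -> indepN M U J -> #|I| < #|J| ->
  exists2 x, x \in J :\: I & indepN M U (x |: I).
Proof.
move=> hU iI iJ lt.
have lJ := indepN_le iJ.
have nz : J :\: I != set0.
  apply/negP; rewrite setD_eq0 => sJI; have := subset_leq_card sJI; lia.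
case/set0Pn: (nz) => x0 x0JI.
have x0I : x0 \notin I by move: x0JI; rewrite inE => /andP[].
case: (ltnP #|I|.+1 (mrk M)) => [lt2|ge2].
  by exists x0 => //; rewrite /indepN cardsU1 x0I add1n lt2.
have cI : #|I|.+1 = mrk M by lia.
have cJ : #|J| = mrk M by lia.
have nPJ : ~~ inUH M U J.
  by move: iJ; rewrite /indepN cJ ltnn eqxx.
case: (boolP [exists x in J :\: I, indepN M U (x |: I)]).
  by case/existsP => x /andP[xJI ix]; exists x.
rewrite negb_exists => /forallP hall.
have Pz : forall z, z \in J :\: I -> inUH M U (z |: I).
  move=> z zJI; have := hall z; rewrite zJI /= /indepN.
  have zI : z \notin I by move: zJI; rewrite inE => /andP[].
  by rewrite cardsU1 zI add1n cI ltnn eqxx /= negbK.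
case/existsP: (Pz x0 x0JI) => H0 /and3P[h0 c0 s0].
case/negP: nPJ; apply/existsP; exists H0; rewrite h0 c0 /=.
apply/subsetP => z zJ.
have sI0 : I \subset U H0 by apply: subset_trans s0; apply: subsetUr.
case: (boolP (z \in I)) => zI; first exact: (subsetP sI0).
have zJI : z \in J :\: I by rewrite inE zI zJ.
case/existsP: (Pz z zJI) => Hz /and3P[hz cz sz].
have sIz : I \subset U Hz by apply: subset_trans sz; apply: subsetUr.
have -> : H0 = Hz by apply: (U_inj hU h0 hz sI0 sIz); rewrite -cI.
by apply: (subsetP sz); rewrite setU11.
Qed.

Definition Nmat (T : finType) (M : matroid T) U (hU : HypU M U) : matroid T :=
  @Matroid T (indepN M U) (N0 M U) (@Nsub T M U) (fun I J => @Naug T M U I J hU).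

Lemma rankN (T : finType) (M : matroid T) U (hU : HypU M U) :
  mrk (Nmat hU) = mrk M.
Proof.
apply/eqP; rewrite eqn_leq; apply/andP; split.
  by apply: mrank_le => I iI _; apply: indepN_le iI.
have [B /andP[iB _] cB] := mrank_wit M [set: T].
have cBr : #|B| = mrk M by [].
apply: (@leq_trans #|B|); first by rewrite cBr.
apply: mrank_ub; last exact: subsetT.
rewrite /= /indepN cBr eqxx ltnn /=; apply/negP => /existsP[H /and3P[hH _ sB]].
have := mrank_ub iB (subset_trans sB (U_sub hU hH)).
by rewrite cBr -(hyp_rank hH) ltnn.
Qed.

Lemma UH_rank (T : finType) (M : matroid T) U (hU : HypU M U) (H : {set T}) :
  hyperplane M H -> mrk M <= #|U H| -> mrank (Nmat hU) (U H) = (mrk M).-1.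
Proof.
move=> hH cH; have rpos := hyp_rpos hH.
apply/eqP; rewrite eqn_leq; apply/andP; split.
  apply: mrank_le => I iI sI; move: iI; rewrite /= /indepN => /orP[lt|]; first by rewrite -ltnS prednK.
  case/andP => _; case/negP; apply/existsP; exists H; by rewrite hH cH sI.
have [S sS cS] := sub_card (leq_trans (leq_pred (mrk M)) cH).
rewrite -cS; apply: mrank_ub => //.
by rewrite /= /indepN cS ltn_predL rpos.
Qed.

Lemma UH_flat (T : finType) (M : matroid T) U (hU : HypU M U) (H : {set T}) :
  hyperplane M H -> mrk M <= #|U H| -> mcl (Nmat hU) (U H) = U H.
Proof.
move=> hH cH; have rpos := hyp_rpos hH.
apply/setP => x; rewrite inE.
case: (boolP (x \in U H)) => xU; first by rewrite (setU1_in xU) eqxx.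
apply/negP => /eqP e.
have [S sS cS] := sub_card (leq_trans (leq_pred (mrk M)) cH).
have xS : x \notin S by apply: contra xU; apply: (subsetP sS).
have : #|x |: S| <= mrank (Nmat hU) (x |: U H).
  apply: mrank_ub; last by rewrite setUS.
  rewrite /= /indepN cardsU1 xS cS add1n prednK // ltnn eqxx /=.
  apply/negP => /existsP[H' /and3P[hH' cH' sH']].
  have sS' : S \subset U H' by apply: subset_trans sH'; apply: subsetUr.
  have eH := U_inj hU hH hH' sS sS' cS.
  by case/negP: xU; rewrite eH; apply: (subsetP sH'); rewrite setU11.
by rewrite e (UH_rank hU hH cH) cardsU1 xS cS add1n prednK // leqNgt ltn_predL rpos.
Qed.

Theorem lemma4p3 (T : finType) (M : matroid T) (U : {set T} -> {set T}) :
  (forall H : {set T}, hyperplane M H ->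
     kfree M (mrk M).-1 (U H) /\ clk M ((mrk M)%:Z - 2)%R (U H) = H) ->
  exists N : matroid T,
    [/\ mrk N = mrk M, paving N &
        forall X : {set T},
          dependent_hyperplane N X <->
          exists2 H : {set T}, hyperplane M H & (X = U H /\ mrk M <= #|U H|)].
Proof.
move=> hU0; have hU : HypU M U := hU0.
exists (Nmat hU); split; first exact: rankN.
  apply/forallP => C; apply/implyP => /andP[nC _].
  by rewrite rankN; move: nC; rewrite /= /indepN negb_or => /andP[]; rewrite -leqNgt.
move=> X; split.
  case/andP => /andP[/eqP fX /eqP rX] nX.
  rewrite rankN in rX.
  have rpos : 0 < mrk M by rewrite -rX.
  have cX : mrk M <= #|X|.
    by move: nX; rewrite /= /indepN negb_or => /andP[]; rewrite -leqNgt.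
  have notind : forall S : {set T}, S \subset X -> #|S| = mrk M -> inUH M U S.
    move=> S sS cS; case: (boolP (inUH M U S)) => // nP.
    have : #|S| <= mrank (Nmat hU) X by apply: mrank_ub => //; rewrite /= /indepN cS eqxx nP orbT.
    by rewrite cS -rX ltnn.
  have [S sS cS] := sub_card cX.
  case/existsP: (notind S sS cS) => H /and3P[hH cH sSH].
  exists H => //; split => //.
  have XU : X \subset U H.
    apply/subsetP => x xX.
    case: (boolP (x \in S)) => xS; first exact: (subsetP sSH).
    have : S != set0 by apply/negP => /eqP S0; move: cS; rewrite S0 cards0 => r0; rewrite -r0 in rpos.
    case/set0Pn => s sinS.
    have cY : #|S :\ s| = (mrk M).-1 by rewrite -cS (cardsD1 s S) sinS.
    have xY : x \notin S :\ s by rewrite inE negb_and xS orbT.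
    have sY : S :\ s \subset X by apply: subset_trans sS; apply: subsetDl.
    have : inUH M U (x |: (S :\ s)).
      apply: notind; first by rewrite subUset sub1set xX sY.
      by rewrite cardsU1 xY cY add1n prednK.
    case/existsP => H' /and3P[hH' cH' sH'].
    have sYH : S :\ s \subset U H by apply: subset_trans sSH; apply: subsetDl.
    have sYH' : S :\ s \subset U H' by apply: subset_trans sH'; apply: subsetUr.
    rewrite (U_inj hU hH hH' sYH sYH' cY).
    by apply: (subsetP sH'); rewrite setU11.
  apply/eqP; rewrite eqEsubset XU /=; apply/subsetP => y yU.
  apply/negPn/negP => yX.
  have : y \notin mcl (Nmat hU) X by rewrite fX.
  rewrite inE => /negP; apply; rewrite eqn_leq (mrank_mono _ (subsetUr [set y] X)) andbT.
  have : mrank (Nmat hU) (y |: X) <= mrank (Nmat hU) (U H).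
    by apply: mrank_mono; rewrite subUset sub1set yU XU.
  by rewrite (UH_rank hU hH cH) -rX.
case=> H hH [-> cH]; have rpos := hyp_rpos hH.
rewrite /dependent_hyperplane /hyperplane /flat (UH_flat hU hH cH) eqxx /=.
rewrite (UH_rank hU hH cH) rankN prednK // eqxx /= /indepN negb_or -leqNgt cH /=.
rewrite negb_and negbK; apply/orP; right; apply/existsP; exists H.
by rewrite hH cH subxx.
Qed.
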